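(* For any subset $S\subseteq V$ with $T\subseteq S$ and $|S|\le 0.49n$, we have $\hat c(\delta_{\hat G}(S))\ge \hat c(\delta_{\hat G}(S\cup V_T))$.
   Context: All logarithms are base 2. Let $n$ be a large even integer, $V$ a set of $n$ vertices, $G=(V,E)$ a 10-regular multigraph on $V$ (the union of 10 perfect matchings); $\mathrm{dist}_G$ is hop distance. Fix a small constant $\varepsilon>0$, $\alpha=\frac{\log 5}{\log 5+1-\varepsilon}$, and a terminal set $T\subseteq V$ of size $\lfloor n/2^{(\log n)^\alpha}\rfloor$. For $i\ge 0$ let $N_i=\{u:\min_{t\in T}\mathrm{dist}_G(u,t)=i\}$ and $B_i=N_0\cup\dots\cup N_i$; let $m=\lfloor 10n/(\log n)^\alpha\rfloor$, $r=\min\{i:|B_i|\ge 2m\}-1$ and $V_T=B_r$. Let $E_{r+1}$ be the set of edges between $N_r$ and $N_{r+1}$. Build an edge set $E_T$ with values $c'$: for each $u\in N_r$, let $E_u$ be the set of edges of $E_{r+1}$ incident to $u$, pick an arbitrary edge $e_u$ from $u$ to a vertex of $N_{r-1}$, and add $e_u$ to $E_T$ with $c'(e_u)=|E_u|$; then for $i=r-1,\dots,1$ in turn, for each $u\in N_i$ let $E_u$ be the set of edges currently in $E_T$ incident to $u$, pick an arbitrary edge $e_u$ from $u$ to a vertex of $N_{i-1}$, and add it to $E_T$ with $c'(e_u)=\sum_{e\in E_u}c'(e)$. Define $\hat G=(V,\hat E,\hat c)$ by $\hat E=E\setminus E'$ where $E'$ is the set of edges of $G$ with both endpoints in $V_T$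 that are not in $E_T$; $\hat c(e)=c'(e)$ for $e\in E_T$ and $\hat c(e)=1$ otherwise. For $S\subseteq V$, $\delta_{\hat G}(S)$ is the set of edges of $\hat G$ with exactly one endpoint in $S$, and $\hat c$ of an edge set is the sum of capacities. *)

(* Defs.v *)
From HB Require Import structures.
From mathcomp Require Import all_boot.
From Stdlib Require Import Reals.

Set Implicit Arguments.
Unset Strict Implicit.
Unset Printing Implicit Defensive.

Definition log2 (x : R) : R := Rdiv (ln x) (ln 2).

Definition alpha (eps : R) : R :=
  Rdiv (log2 5) (Rminus (Rplus (log2 5) 1) eps).

Definition is_T_size (eps : R) (n t : nat) : Prop :=
  let x := Rdiv (INR n) (Rpower 2 (Rpower (log2 (INR n)) (alpha eps))) in
  Rle (INR t) x /\ Rlt x (Rplus (INR t) 1).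

Definition is_m (eps : R) (n m : nat) : Prop :=
  let x := Rdiv (Rmult 10 (INR n)) (Rpower (log2 (INR n)) (alpha eps)) in
  Rle (INR m) x /\ Rlt x (Rplus (INR m) 1).

Section Graph.
Variable V : finType.
(* G is the union of 10 perfect matchings M k (fixed-point-free involutions).
   The edge of matching k at u is represented by the pair (k, u) (equivalently
   (k, M k u)). *)
Variable M : 'I_10 -> V -> V.
Variable T : {set V}.

Definition adj : rel V := fun u v => [exists k : 'I_10, M k u == v].

Definition within (i : nat) (u : V) : bool :=
  [exists j : 'I_i.+1, [exists p : (nat_of_ord j).-tuple V,
     path adj u p && (last u p \in T)]].

Definition Bset (i : nat) : {set V} := [set u | within i u].

Definition inN (i : nat) (u : V) : bool :=
  within i u && ((i == 0) || ~~ within i.-1 u).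

Variable r : nat.

Definition VT : {set V} := Bset r.

Definition distT (u : V) : nat := find (fun i => within i u) (iota 0 r.+1).

(* par u : the matching index of the chosen edge e_u (from u to N_{i-1}) *)
Variable par : V -> 'I_10.

(* the edge (k, w) is the chosen edge e_w of w, for w \in N_i, 1 <= i <= r *)
Definition isPar (k : 'I_10) (w : V) : bool :=
  [&& w \in VT, w \notin T & par w == k].

(* |E_u| for u in N_r : number of edges of E_{r+1} incident to u *)
Definition degE (u : V) : nat := #|[set k : 'I_10 | inN r.+1 (M k u)]|.

(* capj j u = c'(e_u) for u in N_{r-j} *)
Fixpoint capj (j : nat) (u : V) : nat :=
  match j with
  | 0 => degE u
  | j'.+1 => \sum_(w | inN (r - j') w && (M (par w) w == u)) capj j' w
  end.

Definition cap (u : V) : nat := capj (r - distT u) u.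

Definition inET (k : 'I_10) (u : V) : bool := isPar k u || isPar k (M k u).

Definition inEhat (k : 'I_10) (u : V) : bool :=
  ~~ ((u \in VT) && (M k u \in VT)) || inET k u.

Definition chat (k : 'I_10) (u : V) : nat :=
  if isPar k u then cap u else if isPar k (M k u) then cap (M k u) else 1.

(* \hat c (delta_{\hat G}(S)) : each crossing edge (k,{u, M k u}) is counted
   once, through its endpoint u inside S *)
Definition cutcap (S : {set V}) : nat :=
  \sum_(p : 'I_10 * V | [&& p.2 \in S, M p.1 p.2 \notin S & inEhat p.1 p.2])
     chat p.1 p.2.

End Graph.

(* Main.v *)
Require Import Defs.
From HB Require Import structures.
From mathcomp Require Import all_boot.
From Stdlib Require Import Reals Lra.
From mathcomp Require Import zify.
Set Implicit Arguments. Unset Strict Implicit. Unset Printing Implicit Defensive.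

Lemma within0 (V : finType) (M : 'I_10 -> V -> V) (T : {set V}) u :
  within M T 0 u = (u \in T).
Proof.
rewrite /within; apply/existsP/idP.
- case=> j /existsP [p /andP [_ Hl]].
  have j0 : nat_of_ord j = 0 by case: j {p Hl} => [[|]].
  move: p Hl; rewrite j0 => p; by rewrite (tuple0 p).
- move=> uT; exists ord0; apply/existsP; exists [tuple]; by rewrite /= uT.
Qed.

Lemma within_mono (V : finType) (M : 'I_10 -> V -> V) (T : {set V}) a b u :
  a <= b -> within M T a u -> within M T b u.
Proof.
rewrite /within; move=> ab /existsP [j Hj]; apply/existsP.
exists (widen_ord (n:=a.+1) (m:=b.+1) ab j); exact: Hj.
Qed.

Lemma within_step (V : finType) (M : 'I_10 -> V -> V) (T : {set V}) a k u :
  within M T a (M k u) -> within M T a.+1 u.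
Proof.
rewrite /within; move=> /existsP [j /existsP [p /andP [Hp Hl]]]; apply/existsP.
have lt : j.+1 < a.+2 by rewrite ltnS ltn_ord.
exists (Ordinal lt); apply/existsP.
exists [tuple of M k u :: p]; rewrite /= Hp Hl andbT.
rewrite andbT /adj; apply/existsP; by exists k.
Qed.


Lemma distT_spec (V : finType) (M : 'I_10 -> V -> V) (T : {set V}) r u :
  within M T r u ->
  [/\ distT M T r u <= r, within M T (distT M T r u) u &
      forall j, j < distT M T r u -> ~~ within M T j u].
Proof.
move=> Hr; rewrite /distT.
have Hh : has (fun i => within M T i u) (iota 0 r.+1).
  apply/hasP; exists r; [rewrite mem_iota; lia | exact: Hr].
have Hlt := Hh; rewrite has_find size_iota in Hlt.
split.
- by rewrite -ltnS.
- have := nth_find 0 Hh; by rewrite nth_iota.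
- move=> j Hj; have := before_find 0 Hj.
  rewrite nth_iota ?add0n => [->//|]; exact: ltn_trans Hj Hlt.
Qed.

Lemma inN_dist (V : finType) (M : 'I_10 -> V -> V) (T : {set V}) r u a :
  inN M T a u -> a <= r -> a = distT M T r u.
Proof.
move=> /andP [Ha Hb] ar.
have Hr : within M T r u by exact: within_mono ar Ha.
have [H1 H2 H3] := distT_spec Hr.
apply/eqP; rewrite eqn_leq; apply/andP; split.
- rewrite leqNgt; apply/negP => lt.
  case/orP: Hb => [/eqP a0 | Hn]; first by rewrite a0 in lt.
  have : within M T a.-1 u by apply: within_mono H2; rewrite -ltnS prednK // (leq_ltn_trans _ lt).
  by rewrite (negbTE Hn).
- rewrite leqNgt; apply/negP => lt; by rewrite (negbTE (H3 _ lt)) in Ha.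
Qed.

Lemma dist_inN (V : finType) (M : 'I_10 -> V -> V) (T : {set V}) r u :
  within M T r u -> inN M T (distT M T r u) u.
Proof.
move=> Hr; have [H1 H2 H3] := distT_spec Hr.
rewrite /inN H2 /=; case: (distT M T r u) H3 => [//|d] H3 /=.
by rewrite H3.
Qed.

Lemma inVT (V : finType) (M : 'I_10 -> V -> V) (T : {set V}) r u :
  (u \in VT M T r) = within M T r u.
Proof. by rewrite /VT /Bset inE. Qed.

Lemma par_props (V : finType) (M : 'I_10 -> V -> V) (T : {set V}) r
  (par : V -> 'I_10) :
  (forall u, u \in VT M T r -> u \notin T ->
       inN M T (distT M T r u).-1 (M (par u) u)) ->
  forall c, c \in VT M T r -> c \notin T ->
  [/\ 0 < distT M T r c, M (par c) c \in VT M T r &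
      distT M T r (M (par c) c) = (distT M T r c).-1].
Proof.
move=> Hpar c cV cT; have HN := Hpar c cV cT.
move: (cV); rewrite inVT => Hr; have [H1 H2 H3] := distT_spec Hr.
have pos : 0 < distT M T r c.
  rewrite lt0n; apply/negP => /eqP e; rewrite e within0 in H2.
  by rewrite H2 in cT.
have le : (distT M T r c).-1 <= r by rewrite (leq_trans (leq_pred _) H1).
split => //.
- rewrite inVT; case/andP: HN => HN _; exact: within_mono le HN.
- by rewrite -(inN_dist HN le).
Qed.

Lemma capE (V : finType) (M : 'I_10 -> V -> V) (T : {set V}) r
  (par : V -> 'I_10) :
  (forall k u, M k (M k u) = u) ->
  (forall u, u \in VT M T r -> u \notin T ->
       inN M T (distT M T r u).-1 (M (par u) u)) ->
  forall w, w \in VT M T r ->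
  \sum_(k | M k w \notin VT M T r) 1 +
  \sum_(c | [&& c \in VT M T r, c \notin T & M (par c) c == w]) cap M T r par c
  <= cap M T r par w.
Proof.
move=> Minv Hpar w wV.
move: (wV); rewrite inVT => Hr; have [H1 H2 H3] := distT_spec Hr.
have Hch : forall c, [&& c \in VT M T r, c \notin T & M (par c) c == w] ->
   distT M T r c = (distT M T r w).+1 /\ distT M T r c <= r.
  move=> c /and3P [cV cT /eqP e].
  have [pos _ dd] := par_props Hpar cV cT; rewrite e in dd.
  move: (cV); rewrite inVT => Hrc; have [Hc1 _ _] := distT_spec Hrc.
  split => //; lia.
have [lt|eq] : distT M T r w < r \/ distT M T r w = r by lia.
- rewrite [X in X + _]big1 ?add0n; last first.
    move=> k Hk; exfalso; move/negP: Hk; apply; rewrite inVT.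
    apply: (within_mono (a := (distT M T r w).+1)) => //.
    apply: (within_step (k := k)); by rewrite Minv.
  rewrite /cap.
  have -> : r - distT M T r w = (r - (distT M T r w).+1).+1 by lia.
  rewrite /=.
  have -> : r - (r - (distT M T r w).+1) = (distT M T r w).+1 by lia.
  rewrite (eq_bigr (fun c => capj M T r par (r - (distT M T r w).+1) c)); last first.
    move=> c Hc; have [e _] := Hch c Hc; by rewrite /cap e.
  apply: (sub_le_big (R:=nat) (op:=addn) leqnn (fun x y => leq_addr y x)).
  move=> c Hc; have [e le] := Hch c Hc.
  case/and3P: Hc => cV _ ->; rewrite andbT -e.
  apply: dist_inN; by rewrite -inVT.
- rewrite [X in _ + X]big1 ?addn0; last first.
    move=> c Hc; have [e le] := Hch c Hc; exfalso; lia.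
  rewrite /cap eq subnn /= sum1dep_card /degE.
  apply: subset_leq_card; apply/subsetP => k; rewrite !inE => Hk.
  rewrite /inN /= Hk andbT.
  apply: (within_step (k := k)); by rewrite Minv -eq.
Qed.

Theorem lemma3p10 :
  exists eps0 : R, Rlt 0 eps0 /\
  forall eps : R, Rlt 0 eps -> Rlt eps eps0 ->
  exists N0 : nat, forall n : nat, N0 <= n -> ~~ odd n ->
  forall (V : finType) (M : 'I_10 -> V -> V),
    #|V| = n ->
    (forall k u, M k (M k u) = u) ->
    (forall k u, M k u != u) ->
  forall T : {set V}, is_T_size eps n #|T| ->
  forall m : nat, is_m eps n m ->
  forall r : nat,
    (* r + 1 = min { i : |B_i| >= 2m } *)
    2 * m <= #|Bset M T r.+1| ->
    (forall i, i <= r -> #|Bset M T i| < 2 * m) ->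
  forall par : V -> 'I_10,
    (* e_u goes from u \in N_i (1 <= i <= r) to a vertex of N_{i-1} *)
    (forall u, u \in VT M T r -> u \notin T ->
       inN M T (distT M T r u).-1 (M (par u) u)) ->
  forall S : {set V}, T \subset S -> 100 * #|S| <= 49 * n ->
    cutcap M T r par (S :|: VT M T r) <= cutcap M T r par S.
Proof.
exists 1%R; split; first lra.
move=> eps _ _; exists 0 => n _ _ V M _ Minv _ T _ m _ r _ _ par Hpar S TS _.
set VTs := VT M T r.
set Up := fun u => (u \in VTs) && (u \notin S).
set pw := fun w => M (par w) w.
set out := fun u => \sum_(k | M k u \notin VTs) 1.
set cp := cap M T r par.
have notT : forall u, u \notin S -> u \notin T.
  move=> u uS; apply/negP => uT; move/negP: uS; apply; exact: (subsetP TS).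
(* telescoping *)
have Htel : \sum_(u | Up u) out u <= \sum_(w | Up w && (pw w \in S)) cp w.
  have h1 : \sum_(w | Up w) (out w + \sum_(c | Up c && (pw c == w)) cp c)
            <= \sum_(w | Up w) cp w.
    apply: leq_sum => w /andP [wV wS].
    apply: leq_trans (capE Minv Hpar wV); rewrite leq_add2l.
    apply: (sub_le_big (R:=nat) (op:=addn) leqnn (fun x y => leq_addr y x)).
    move=> c /andP [/andP [cV cS] e]; by rewrite cV notT.
  rewrite big_split /= in h1.
  have h2 : \sum_(w | Up w) \sum_(c | Up c && (pw c == w)) cp c
            = \sum_(c | Up c && Up (pw c)) cp c.
    rewrite [RHS](partition_big pw Up) /=; last by move=> c /andP [_ H].
    apply: eq_bigr => j Hj; apply: eq_bigl => c.
    case e: (pw c == j); rewrite ?andbF ?andbT //.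
    by move/eqP: e => ->; rewrite Hj andbT.
  have h3 : \sum_(w | Up w) cp w = \sum_(w | Up w && (pw w \in S)) cp w + \sum_(w | Up w && (pw w \notin S)) cp w by apply: bigID.
  have h4 : \sum_(w | Up w && (pw w \notin S)) cp w
            <= \sum_(c | Up c && Up (pw c)) cp c.
    apply: (sub_le_big (R:=nat) (op:=addn) leqnn (fun x y => leq_addr y x)).
    move=> w /andP [Hw pS]; rewrite Hw /Up pS andbT.
    case/andP: Hw => wV wS; by have [_ -> _] := par_props Hpar wV (notT _ wS).
  rewrite h2 in h1; lia.
rewrite /cutcap -/VTs.
rewrite [X in X <= _](bigID (fun p : 'I_10 * V => p.2 \in S)) /=.
rewrite [X in _ <= X](bigID (fun p : 'I_10 * V => M p.1 p.2 \in VTs)) /= [X in _ <= X]addnC.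
apply: leq_add.
  apply: eq_leq; apply: eq_bigl => -[k u] /=; rewrite !in_setU.
  case: (u \in S); rewrite /= ?andbF ?andbT //; case: (M k u \in S); case: (M k u \in VTs); rewrite /= ?andbF ?andbT //.
apply: (leq_trans _ (leq_trans Htel _)).
  have -> : \sum_(u | Up u) out u
      = \sum_(p : 'I_10 * V | Up p.2 && (M p.1 p.2 \notin VTs)) 1.
    by rewrite /out (exchange_big_dep predT) //= pair_big_dep.
  apply: (@leq_trans (\sum_(p : 'I_10 * V | Up p.2 && (M p.1 p.2 \notin VTs)) chat M T r par p.1 p.2)).
    apply: (sub_le_big (R:=nat) (op:=addn) leqnn (fun x y => leq_addr y x)).
    move=> [k u] /=; rewrite !in_setU /Up.
    by move: (u \in S) (u \in VTs) (M k u \in S) (M k u \in VTs) => [] [] [] [] /=; rewrite ?andbF ?andbT; auto.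
  apply: eq_leq; apply: eq_bigr => -[k u] /= /andP [/andP [uV uS] nV].
  rewrite /chat.
  have -> : isPar M T r par k u = false.
    apply/negP => /and3P [uV' uT /eqP pk]; have [_ H _] := par_props Hpar uV' uT.
    by rewrite pk (negbTE nV) in H.
  by rewrite /isPar (negbTE nV).
apply: (@leq_trans (\sum_(p : 'I_10 * V | [&& p.2 \in S, isPar M T r par p.1 (M p.1 p.2) & M p.1 p.2 \notin S]) chat M T r par p.1 p.2)); last first.
  apply: (sub_le_big (R:=nat) (op:=addn) leqnn (fun x y => leq_addr y x)).
  move=> [k u] /= /and3P [uS Hp nS]; rewrite uS nS /inEhat /inET Hp !orbT /=.
  by case/and3P: Hp.
rewrite (eq_bigr (fun p => cp (M p.1 p.2))); last first.
  move=> [k u] /= /and3P [uS Hp nS]; rewrite /chat.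
  have -> : isPar M T r par k u = false.
    apply/negP => /and3P [uV uT /eqP pk].
    case/and3P: (Hp) => wV wT /eqP pw'.
    have [pos1 _ d1] := par_props Hpar uV uT.
    have [pos2 _ d2] := par_props Hpar wV wT.
    rewrite pk in d1; rewrite pw' Minv in d2; lia.
  by rewrite Hp.
rewrite (reindex_onto (fun w => (par w, pw w)) (fun p : 'I_10 * V => M p.1 p.2)) /=; last first.
  move=> [k u] /= /and3P [_ /and3P [_ _ /eqP pk] _]; by rewrite /pw pk Minv.
apply: eq_leq; apply: eq_big => w; last by rewrite /pw Minv.
rewrite /Up /pw /isPar Minv eqxx !andbT.
case wS: (w \in S); rewrite ?andbF ?andFb //=.
have := notT w; rewrite wS => /(_ isT) ->.
by rewrite eqxx !andbT andbC.
Qed.
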